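(* In the polar Brauer category $\mathcal{AB}(\delta)$ over a commutative ring $K$, $\delta\in K$, with $\mathbb G_i=Z_i\otimes I-\mathbb H^i$ and $\Phi=(1-\delta)\mathbb I_1-\mathbb H$, the following hold in $\mathrm{End}_{\mathcal{AB}(\delta)}(1)$ for all $\ell\ge0$: $$(\mathbb H^{\ell+1})^T=\sum_{i=1}^\ell\mathbb G_i\Phi^{\ell-i}-\mathbb H\Phi^\ell,\qquad (\mathbb H^{\ell+1})^T=\sum_{i=1}^\ell\Phi^{\ell-i}\mathbb G_i-\Phi^\ell\mathbb H,$$ and in particular $\sum_{i=1}^{\ell-1}[Z_i\otimes I,\Phi^{\ell-i}]=0$ for all $\ell$.
   Context: Let $K$ be a commutative ring and $\delta\in K$. The Brauer category $\mathcal B(\delta)$ has objects $\mathbb N$; $\mathrm{Hom}_{\mathcal B(\delta)}(r,s)$ is the free $K$-module on Brauer $(r,s)$-diagrams; composition $BA$ (first $A$, then $B$) is stacking with closed loops replaced by a factor $\delta$; $\otimes$ is juxtaposition. $I$ is the identity of $1$, $I_r=I^{\otimes r}$, $X$ the crossing, $\cap:2\to0$ the cap, $\cup:0\to2$ the cup, $H=X-\cup\circ\cap$. The polar Brauer category $\mathcal{AB}(\delta)$ is the $K$-linear category with objects $\mathbb N$ generated, under composition and the right action $\mathbb D\mapsto\mathbb D\otimes B$ of morphisms $B$ of $\mathcal B(\delta)$ (juxtaposing $B$ on the right; $\mathbb D:r\to s$, $B:k\to\ell$ give $\mathbb D\otimes B:r+k\to s+\ell$), by $\mathbb I_0$ (a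 vertical pole, identity of $0$) and $\mathbb H:1\to1$ (pole joined by a horizontal connector to one thin strand), subject to: (i) $(\mathbb I_0\otimes B)(\mathbb I_0\otimes A)=\mathbb I_0\otimes BA$, $(\mathbb H\otimes B)(\mathbb I_1\otimes A)=(\mathbb I_1\otimes B)(\mathbb H\otimes A)=\mathbb H\otimes BA$, with $\mathbb I_r=\mathbb I_0\otimes I_r$; (ii) $[\mathbb H_{01},\mathbb H_{02}+\mathbb H_{12}]=0$ with $[a,b]=ab-ba$, $\mathbb H_{01}=\mathbb H\otimes I$, $\mathbb X_0=\mathbb I_0\otimes X$, $\mathbb H_{02}=\mathbb X_0\mathbb H_{01}\mathbb X_0$, $\mathbb H_{12}=\mathbb I_0\otimes H$; (iii) $\mathbb H^T=-\mathbb H$, where for $\mathbb D:1\to1$ we write $\mathbb D^T=(\mathbb I_0\otimes\cap\otimes I)(\mathbb D\otimes X)(\mathbb I_0\otimes\cup\otimes I)$; relations are imposed in all composites and right tensor products. Products denote composition, powers are composition powers ($\mathbb H^0=\Phi^0=\mathbb I_1$). Let $\Pi=\mathbb I_0\otimes\cap$, $\amalg=\mathbb I_0\otimes\cup$ and $Z_\ell=\Pi(\mathbb H^\ell\otimes I)\amalg\in\mathrm{End}(0)$ for $\ell\ge1$. *)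

(* Defs.v *)
From HB Require Import structures.
Set Warnings "-notation-overridden,-ambiguous-paths,-projection-no-head-constant,-redundant-canonical-projection".
From mathcomp Require Import all_boot all_order all_algebra.

Set Implicit Arguments.
Unset Strict Implicit.
Unset Printing Implicit Defensive.

Import GRing.Theory.

(* A Brauer (r,s)-diagram is a perfect matching of the r bottom points   *)
(* (inl i, i : 'I_r) and the s top points (inr j, j : 'I_s), encoded as  *)
(* a fixed-point-free involution.  Points in a row are numbered from the *)
(* left.                                                                 *)

Definition bpt (r s : nat) := ('I_r + 'I_s)%type.

Definition is_brauer r s (f : {ffun bpt r s -> bpt r s}) : bool :=
  [forall x, (f (f x) == x) && (f x != x)].

Record bdiag (r s : nat) := BDiag {
  bfun :> {ffun bpt r s -> bpt r s};
  bfunP : is_brauer bfun }.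

HB.instance Definition _ r s := [isSub for @bfun r s].
HB.instance Definition _ r s := [Equality of bdiag r s by <:].

Section BComp.
Variables (r s t : nat) (d : bdiag r s) (e : bdiag s t).

(* points of the stacked picture: outer points (bottom of d / top of e)  *)
(* and the s middle points                                               *)
Definition cpt := (('I_r + 'I_t) + 'I_s)%type.

Definition inj_lo (p : bpt r s) : cpt :=
  match p with inl i => inl (inl i) | inr m => inr m end.
Definition inj_hi (p : bpt s t) : cpt :=
  match p with inl m => inr m | inr j => inl (inr j) end.

Definition cgraph : rel cpt := fun q q' =>
  [exists p, (inj_lo p == q) && (inj_lo (d p) == q')] ||
  [exists p, (inj_hi p == q) && (inj_hi (e p) == q')].

Definition bcomp_fun (x : bpt r t) : bpt r t :=
  odflt x [pick y | (y != x) && connect cgraph (inl x) (inl y)].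

(* number of closed loops: components consisting only of middle points *)
Definition bcomp_loops : nat :=
  #|[pred m : 'I_s | (fingraph.root cgraph (inr m) == inr m) &&
                     ~~ [exists y, connect cgraph (inr m) (inl y)]]|.

(* e \o d = delta ^ (bcomp_loops) * (diagram) ; the diagram is always   *)
(* valid, the option only avoids a proof obligation                     *)
Definition bcomp : option (nat * bdiag r t) :=
  match insub [ffun x => bcomp_fun x] with
  | Some c => Some (bcomp_loops, c)
  | None => None
  end.
End BComp.

Section BTens.
Variables (r s k l : nat) (d : bdiag r s) (e : bdiag k l).

Definition lift_l (p : bpt r s) : bpt (r + k) (s + l) :=
  match p with inl i => inl (lshift k i) | inr j => inr (lshift l j) end.
Definition lift_r (p : bpt k l) : bpt (r + k) (s + l) :=
  match p with inl i => inl (rshift r i) | inr j => inr (rshift s j) end.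

Definition btens_fun (x : bpt (r + k) (s + l)) : bpt (r + k) (s + l) :=
  match x with
  | inl i => match split i with
             | inl i1 => lift_l (d (inl i1)) | inr i2 => lift_r (e (inl i2)) end
  | inr j => match split j with
             | inl j1 => lift_l (d (inr j1)) | inr j2 => lift_r (e (inr j2)) end
  end.

Definition btens : option (bdiag (r + k) (s + l)) := insub [ffun x => btens_fun x].
End BTens.

Definition bid_fun r : {ffun bpt r r -> bpt r r} :=
  [ffun x => match x with inl i => inr i | inr i => inl i end].
Lemma bid_proof r : is_brauer (bid_fun r).
Proof. by apply/forallP => -[i|i]; rewrite !ffunE /= !eqxx. Qed.
Definition bid r : bdiag r r := BDiag (bid_proof r).

Lemma rev_ord2_neq (i : 'I_2) : rev_ord i != i.
Proof. by case: i => -[|[|]]. Qed.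

Definition bX_fun : {ffun bpt 2 2 -> bpt 2 2} :=
  [ffun x => match x with inl i => inr (rev_ord i) | inr i => inl (rev_ord i) end].
Lemma bX_proof : is_brauer bX_fun.
Proof. by apply/forallP => -[i|i]; rewrite !ffunE /= rev_ordK !eqxx. Qed.
Definition bX : bdiag 2 2 := BDiag bX_proof.

Definition bcap_fun : {ffun bpt 2 0 -> bpt 2 0} :=
  [ffun x => match x with inl i => inl (rev_ord i) | inr i => inr i end].
Lemma bcap_proof : is_brauer bcap_fun.
Proof.
by apply/forallP => -[i|[]//]; rewrite !ffunE /= rev_ordK eqxx /= inj_eq;
  [exact: rev_ord2_neq | move=> ? ? []].
Qed.
Definition bcap : bdiag 2 0 := BDiag bcap_proof.

Definition bcup_fun : {ffun bpt 0 2 -> bpt 0 2} :=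
  [ffun x => match x with inl i => inl i | inr i => inr (rev_ord i) end].
Lemma bcup_proof : is_brauer bcup_fun.
Proof.
by apply/forallP => -[[]//|i]; rewrite !ffunE /= rev_ordK eqxx /= inj_eq;
  [exact: rev_ord2_neq | move=> ? ? []].
Qed.
Definition bcup : bdiag 0 2 := BDiag bcup_proof.

Definition bcupcap_fun : {ffun bpt 2 2 -> bpt 2 2} :=
  [ffun x => match x with inl i => inl (rev_ord i) | inr i => inr (rev_ord i) end].
Lemma bcupcap_proof : is_brauer bcupcap_fun.
Proof.
by apply/forallP => -[i|i]; rewrite !ffunE /= rev_ordK eqxx /= inj_eq;
  try exact: rev_ord2_neq; move=> ? ? [].
Qed.
Definition bcupcap : bdiag 2 2 := BDiag bcupcap_proof.

Inductive tm (K : Type) : nat -> nat -> Type :=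
| tI0 : tm K 0 0
| tH : tm K 1 1
| tcomp r s t : tm K s t -> tm K r s -> tm K r t
| ttens r s k l : tm K r s -> bdiag k l -> tm K (r + k) (s + l)
| tzero r s : tm K r s
| tadd r s : tm K r s -> tm K r s -> tm K r s
| tscale r s : K -> tm K r s -> tm K r s
| tcast r s r' s' : r = r' -> s = s' -> tm K r s -> tm K r' s'.

Arguments tI0 {K}.
Arguments tH {K}.
Arguments tcomp {K r s t}.
Arguments ttens {K r s k l}.
Arguments tzero {K r s}.
Arguments tadd {K r s}.
Arguments tscale {K r s}.
Arguments tcast {K r s r' s'}.

Section AB.
Variable K : comPzRingType.
Implicit Types (a b : K).

Definition tid r : tm K r r := ttens tI0 (bid r).
Definition tneg r s (D : tm K r s) := tscale (-1)%R D.
Definition tsub r s (D E : tm K r s) := tadd D (tneg E).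
Definition tcommut r (D E : tm K r r) := tsub (tcomp D E) (tcomp E D).
Fixpoint tpow r (D : tm K r r) (n : nat) : tm K r r :=
  match n with 0 => tid r | n'.+1 => tcomp D (tpow D n') end.
Definition tsum r s (F : nat -> tm K r s) (a b : nat) : tm K r s :=
  foldr (fun i acc => tadd (F i) acc) tzero (index_iota a b).

Definition tH01 : tm K 2 2 := ttens tH (bid 1).
Definition tX0 : tm K 2 2 := ttens tI0 bX.
Definition tH02 : tm K 2 2 := tcomp tX0 (tcomp tH01 tX0).
Definition tH12 : tm K 2 2 := tsub (ttens tI0 bX) (ttens tI0 bcupcap). (* I_0 (x) H *)
Definition tPi : tm K 2 0 := ttens tI0 bcap.
Definition tAmalg : tm K 0 2 := ttens tI0 bcup.
Definition ttrans (D : tm K 1 1) : tm K 1 1 :=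
  tcomp (ttens tPi (bid 1)) (tcomp (ttens D bX) (ttens tAmalg (bid 1))).

Variable delta : K.

Inductive abeq : forall r s, tm K r s -> tm K r s -> Prop :=
| ab_refl r s (D : tm K r s) : abeq D D
| ab_sym r s (D E : tm K r s) : abeq D E -> abeq E D
| ab_trans r s (D E F : tm K r s) : abeq D E -> abeq E F -> abeq D F
| ab_comp r s t (B B' : tm K s t) (A A' : tm K r s) :
    abeq B B' -> abeq A A' -> abeq (tcomp B A) (tcomp B' A')
| ab_tens r s k l (D D' : tm K r s) (b : bdiag k l) :
    abeq D D' -> abeq (ttens D b) (ttens D' b)
| ab_add r s (D D' E E' : tm K r s) :
    abeq D D' -> abeq E E' -> abeq (tadd D E) (tadd D' E')
| ab_scale r s a (D D' : tm K r s) : abeq D D' -> abeq (tscale a D) (tscale a D')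
| ab_cast r s r' s' (e1 : r = r') (e2 : s = s') (D D' : tm K r s) :
    abeq D D' -> abeq (tcast e1 e2 D) (tcast e1 e2 D')
| ab_cast_id r s (D : tm K r s) : abeq (tcast erefl erefl D) D
| ab_addA r s (D E F : tm K r s) : abeq (tadd D (tadd E F)) (tadd (tadd D E) F)
| ab_addC r s (D E : tm K r s) : abeq (tadd D E) (tadd E D)
| ab_add0 r s (D : tm K r s) : abeq (tadd tzero D) D
| ab_addN r s (D : tm K r s) : abeq (tadd D (tscale (-1)%R D)) tzero
| ab_scaleA r s a b (D : tm K r s) : abeq (tscale a (tscale b D)) (tscale (a * b)%R D)
| ab_scale1 r s (D : tm K r s) : abeq (tscale 1%R D) D
| ab_scale0 r s (D : tm K r s) : abeq (tscale 0%R D) tzero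
| ab_scaleDl r s a b (D : tm K r s) :
    abeq (tscale (a + b)%R D) (tadd (tscale a D) (tscale b D))
| ab_scaleDr r s a (D E : tm K r s) :
    abeq (tscale a (tadd D E)) (tadd (tscale a D) (tscale a E))
| ab_compA r s t u (C : tm K t u) (B : tm K s t) (A : tm K r s) :
    abeq (tcomp C (tcomp B A)) (tcomp (tcomp C B) A)
| ab_id_l r s (D : tm K r s) : abeq (tcomp (tid s) D) D
| ab_id_r r s (D : tm K r s) : abeq (tcomp D (tid r)) D
| ab_compDl r s t (B B' : tm K s t) (A : tm K r s) :
    abeq (tcomp (tadd B B') A) (tadd (tcomp B A) (tcomp B' A))
| ab_compDr r s t (B : tm K s t) (A A' : tm K r s) :
    abeq (tcomp B (tadd A A')) (tadd (tcomp B A) (tcomp B A'))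
| ab_compZl r s t a (B : tm K s t) (A : tm K r s) :
    abeq (tcomp (tscale a B) A) (tscale a (tcomp B A))
| ab_compZr r s t a (B : tm K s t) (A : tm K r s) :
    abeq (tcomp B (tscale a A)) (tscale a (tcomp B A))
| ab_tensD r s k l (D E : tm K r s) (b : bdiag k l) :
    abeq (ttens (tadd D E) b) (tadd (ttens D b) (ttens E b))
| ab_tensZ r s k l a (D : tm K r s) (b : bdiag k l) :
    abeq (ttens (tscale a D) b) (tscale a (ttens D b))
| ab_interchange r s t k l m (D : tm K s t) (D' : tm K r s)
    (b : bdiag l m) (b' : bdiag k l) n (c : bdiag k m) :
    bcomp b' b = Some (n, c) ->
    abeq (tcomp (ttens D b) (ttens D' b')) (tscale (delta ^+ n)%R (ttens (tcomp D D') c))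
| ab_tens_unit r s (D : tm K r s) :
    abeq (ttens D (bid 0)) (tcast (esym (addn0 r)) (esym (addn0 s)) D)
| ab_tens_assoc r s k l m n (D : tm K r s) (b : bdiag k l) (c : bdiag m n)
    (bc : bdiag (k + m) (l + n)) :
    btens b c = Some bc ->
    abeq (ttens (ttens D b) c) (tcast (addnA r k m) (addnA s l n) (ttens D bc))
| ab_rel_i0 k l m (A : bdiag k l) (B : bdiag l m) n (C : bdiag k m) :
    bcomp A B = Some (n, C) ->
    abeq (tcomp (ttens tI0 B) (ttens tI0 A)) (tscale (delta ^+ n)%R (ttens tI0 C))
| ab_rel_i1 k l m (A : bdiag k l) (B : bdiag l m) n (C : bdiag k m) :
    bcomp A B = Some (n, C) ->
    abeq (tcomp (ttens tH B) (ttens (tid 1) A)) (tscale (delta ^+ n)%R (ttens tH C))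
| ab_rel_i2 k l m (A : bdiag k l) (B : bdiag l m) n (C : bdiag k m) :
    bcomp A B = Some (n, C) ->
    abeq (tcomp (ttens (tid 1) B) (ttens tH A)) (tscale (delta ^+ n)%R (ttens tH C))
| ab_rel_ii : abeq (tcommut tH01 (tadd tH02 tH12)) tzero
| ab_rel_iii : abeq (ttrans tH) (tneg tH).

Definition tZ (l : nat) : tm K 0 0 := tcomp tPi (tcomp (ttens (tpow tH l) (bid 1)) tAmalg).
Definition tG (i : nat) : tm K 1 1 := tsub (ttens (tZ i) (bid 1)) (tpow tH i).
Definition tPhi : tm K 1 1 := tsub (tscale (1 - delta)%R (tid 1)) tH.

End AB.

Arguments abeq {K} delta {r s}.
Arguments tid {K} r.
Arguments tneg {K r s}.
Arguments tsub {K r s}.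
Arguments tcommut {K r}.
Arguments tpow {K r}.
Arguments tsum {K r s}.
Arguments tH01 {K}.
Arguments tX0 {K}.
Arguments tH02 {K}.
Arguments tH12 {K}.
Arguments tPi {K}.
Arguments tAmalg {K}.
Arguments ttrans {K}.
Arguments tZ {K}.
Arguments tG {K}.
Arguments tPhi {K}.

(* Main.v *)
Require Import Defs.
Set Warnings "-notation-overridden,-ambiguous-paths".
From mathcomp Require Import all_boot all_order all_algebra.
From Stdlib Require Import Setoid Morphisms.
From mathcomp Require Import ring.
Set Implicit Arguments. Unset Strict Implicit. Unset Printing Implicit Defensive.
Import GRing.Theory.

Definition oord n (i : nat) : option 'I_n :=
  (if i < n as b return (i < n = b -> option 'I_n) then fun H => Some (Ordinal H)
   else fun _ => None) (erefl _).
Definition ord_enum' n : seq 'I_n := pmap (@oord n) (iota 0 n).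
Lemma val_ord_enum' n : map val (ord_enum' n) = iota 0 n.
Proof.
rewrite /ord_enum' pmap_filter; last first.
  by move=> i; rewrite /oord; move: (erefl (i < n)); case: {2 3}(i < n).
rewrite (@eq_in_filter _ _ predT) ?filter_predT // => i; rewrite mem_iota add0n /= => Hi.
by rewrite /oord; move: (erefl (i < n)); case: {2 3}(i < n) => //; rewrite Hi.
Qed.
Lemma enum_ordE n : Finite.enum 'I_n = ord_enum' n.
Proof. by apply: (inj_map val_inj); rewrite val_ord_enum' unlock val_ord_enum. Qed.
Lemma enum_sumE (A B : finType) :
  Finite.enum (A + B)%type = map inl (Finite.enum A) ++ map inr (Finite.enum B).
Proof. by rewrite unlock /= /sum_enum unlock. Qed.

Definition benum r s : seq (bpt r s) := map inl (ord_enum' r) ++ map inr (ord_enum' s).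
Lemma benumE r s : Finite.enum (bpt r s) = benum r s.
Proof. by rewrite enum_sumE !enum_ordE. Qed.
Definition cenum r s t : seq (cpt r s t) := map inl (benum r t) ++ map inr (ord_enum' s).
Lemma cenumE r s t : Finite.enum (cpt r s t) = cenum r s t.
Proof. by rewrite /cpt enum_sumE benumE enum_ordE. Qed.

Lemma existsE (T : finType) (P : pred T) : [exists x, P x] = has P (Finite.enum T).
Proof.
apply/existsP/hasP => [[x Px]|[x _ Px]]; last by exists x.
by exists x => //; rewrite -enumT mem_enum.
Qed.
Lemma forallE (T : finType) (P : pred T) : [forall x, P x] = all P (Finite.enum T).
Proof.
apply/forallP/allP => [H x _|H x]; first exact: H.
by apply: H; rewrite -enumT mem_enum.
Qed.
Lemma cardE' (T : finType) (P : pred T) : #|[pred x | P x]| = count P (Finite.enum T).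
Proof. by rewrite cardE /enum_mem size_filter. Qed.

Definition connect_c (T : finType) (L : seq T) (e : rel T) x y :=
  y \in dfs (fun u => filter (e u) L) (size L) [::] x.
Lemma connectE (T : finType) (e : rel T) x y :
  connect e x y = connect_c (Finite.enum T) e x y.
Proof. by rewrite /connect /connect_c /rgraph /= unlock /enum_mem /= size_filter count_predT. Qed.

Section Comp.
Variables (r s t : nat) (gd : bpt r s -> bpt r s) (ge : bpt s t -> bpt s t).
Definition cgraph_c : rel (cpt r s t) := fun q q' =>
  has (fun p => (inj_lo t p == q) && (inj_lo t (gd p) == q')) (benum r s) ||
  has (fun p => (inj_hi r p == q) && (inj_hi r (ge p) == q')) (benum s t).
Definition conn_c := connect_c (cenum r s t) cgraph_c.
Definition fun_c (x : bpt r t) : bpt r t :=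
  odflt x (ohead (filter (fun y => (y != x) && conn_c (inl x) (inl y)) (benum r t))).
Definition root_c (x : cpt r s t) := odflt x (ohead (filter (conn_c x) (cenum r s t))).
Definition loops_c : nat :=
  count (fun m => (root_c (inr m) == inr m) &&
                  ~~ has (fun y => conn_c (inr m) (inl y)) (benum r t)) (ord_enum' s).
End Comp.

Lemma bcomp_mk r s t (d : bdiag r s) (e : bdiag s t) gd ge n (c : bdiag r t) gc :
  d =1 gd -> e =1 ge -> c =1 gc ->
  (loops_c gd ge == n) && all (fun x => fun_c gd ge x == gc x) (benum r t) ->
  bcomp d e = Some (n, c).
Proof.
move=> Hd He Hc /andP[/eqP Hn /allP Hf].
have Hg : cgraph d e =2 cgraph_c gd ge.
  by move=> q q'; rewrite /cgraph /cgraph_c !existsE !benumE; congr (_ || _);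
     apply: eq_has => p; rewrite ?Hd ?He.
have Hcn : forall x y, connect (cgraph d e) x y = conn_c gd ge x y.
  by move=> x y; rewrite (eq_connect Hg) connectE cenumE.
have Hfun : [ffun x => bcomp_fun d e x] = bfun c.
  apply/ffunP => x; rewrite ffunE Hc -(eqP (Hf x _)); last by rewrite -benumE -enumT mem_enum.
  rewrite /bcomp_fun /fun_c /pick /enum_mem benumE; congr (odflt _ (ohead _)).
  by apply: eq_filter => y; rewrite -Hcn.
rewrite /bcomp Hfun (_ : insub (bfun c) = Some c); last exact: valK.
congr (Some (_, _)); rewrite -Hn /bcomp_loops cardE' enum_ordE; apply: eq_count => m.
rewrite /= /fingraph.root /root_c /pick /enum_mem cenumE existsE benumE.
congr (((odflt _ (ohead _)) == _) && ~~ _).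
  by apply: eq_filter => y; rewrite -Hcn.
by apply: eq_has => y; rewrite Hcn.
Qed.

Lemma splitc_subproof m n (i : 'I_(m + n)) : (i < m) = false -> i - m < n.
Proof. by move=> H; rewrite ltn_subLR ?ltn_ord // leqNgt H. Qed.
Definition splitc m n (i : 'I_(m + n)) : 'I_m + 'I_n :=
  (if (i : nat) < m as b return ((i : nat) < m = b -> 'I_m + 'I_n)
   then fun H => inl (Ordinal H) else fun H => inr (Ordinal (splitc_subproof H))) (erefl _).
Lemma splitcE m n (i : 'I_(m + n)) : splitc i = split i.
Proof.
rewrite /splitc /split; move: (erefl (i < m)); case: {2 3}(i < m) => H;
  destruct (ltnP i m) as [H'|H']; try (congr (_ _); apply: val_inj => //=).
- by exfalso; move: H'; rewrite leqNgt H.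
- by exfalso; move: H'; rewrite H.
Qed.

Section Tens.
Variables (r s k l : nat) (gd : bpt r s -> bpt r s) (ge : bpt k l -> bpt k l).
Definition btens_c (x : bpt (r + k) (s + l)) : bpt (r + k) (s + l) :=
  match x with
  | inl i => match splitc i with
             | inl i1 => lift_l k l (gd (inl i1)) | inr i2 => lift_r r s (ge (inl i2)) end
  | inr j => match splitc j with
             | inl j1 => lift_l k l (gd (inr j1)) | inr j2 => lift_r r s (ge (inr j2)) end
  end.
End Tens.

Lemma btens_mk r s k l (d : bdiag r s) (e : bdiag k l) gd ge (c : bdiag (r + k) (s + l)) gc :
  d =1 gd -> e =1 ge -> c =1 gc ->
  all (fun x => btens_c gd ge x == gc x) (benum (r + k) (s + l)) ->
  btens d e = Some c.
Proof.
move=> Hd He Hc /allP Hf.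
rewrite /btens (_ : finfun _ = bfun c); first exact: valK.
  apply/ffunP => x; rewrite ffunE Hc -(eqP (Hf x _)); last by rewrite -benumE -enumT mem_enum.
  by case: x => [i|j] /=; rewrite splitcE; case: split => ? /=; rewrite ?Hd ?He.
Qed.

Definition code r s (x : bpt r s) : nat := match x with inl i => val i | inr j => r + val j end.
Definition mkg r s (tbl : seq nat) (x : bpt r s) : bpt r s := nth x (benum r s) (nth 0 tbl (code x)).
Arguments mkg r s tbl x : clear implicits.
Definition mkd r s tbl : {ffun bpt r s -> bpt r s} := [ffun x => mkg r s tbl x].
Lemma mk_brauer r s tbl :
  all (fun x => (mkg r s tbl (mkg r s tbl x) == x) && (mkg r s tbl x != x)) (benum r s) ->
  is_brauer (mkd r s tbl).
Proof. by move=> H; rewrite /is_brauer forallE benumE; apply: sub_all H => x; rewrite !ffunE. Qed.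
Lemma mkdE r s tbl : mkd r s tbl =1 mkg r s tbl.
Proof. by move=> x; rewrite ffunE. Qed.

Definition gid r (x : bpt r r) : bpt r r := match x with inl i => inr i | inr i => inl i end.
Lemma bidE r : bid r =1 @gid r. Proof. by move=> x; rewrite /= ffunE. Qed.
Definition gX (x : bpt 2 2) : bpt 2 2 :=
  match x with inl i => inr (rev_ord i) | inr i => inl (rev_ord i) end.
Lemma bXE : bX =1 gX. Proof. by move=> x; rewrite /= ffunE. Qed.
Definition gcap (x : bpt 2 0) : bpt 2 0 := match x with inl i => inl (rev_ord i) | inr i => inr i end.
Lemma bcapE : bcap =1 gcap. Proof. by move=> x; rewrite /= ffunE. Qed.
Definition gcup (x : bpt 0 2) : bpt 0 2 := match x with inl i => inl i | inr i => inr (rev_ord i) end.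
Lemma bcupE : bcup =1 gcup. Proof. by move=> x; rewrite /= ffunE. Qed.
Definition gcupcap (x : bpt 2 2) : bpt 2 2 :=
  match x with inl i => inl (rev_ord i) | inr i => inr (rev_ord i) end.
Lemma bcupcapE : bcupcap =1 gcupcap. Proof. by move=> x; rewrite /= ffunE. Qed.

Ltac dE := first [ exact: bidE | exact: bXE | exact: bcapE | exact: bcupE | exact: bcupcapE | exact: mkdE ].
Ltac bcomp_tac := apply: bcomp_mk; [dE | dE | dE | vm_compute; reflexivity].
Ltac btens_tac := apply: btens_mk; [dE | dE | dE | vm_compute; reflexivity].

Lemma testXX : bcomp bX bX = Some (0, bid 2).
Proof. bcomp_tac. Qed.
Lemma testEE : bcomp bcupcap bcupcap = Some (1, bcupcap).
Proof. bcomp_tac. Qed.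
Lemma testcc : bcomp bcup bcap = Some (1, bid 0).
Proof. bcomp_tac. Qed.

Lemma dIX_p : is_brauer (mkd 3 3 [:: 3; 5; 4; 0; 2; 1]). Proof. apply: mk_brauer; vm_compute; reflexivity. Qed.
Definition dIX : bdiag 3 3 := BDiag dIX_p.
Lemma dXI_p : is_brauer (mkd 3 3 [:: 4; 3; 5; 1; 0; 2]). Proof. apply: mk_brauer; vm_compute; reflexivity. Qed.
Definition dXI : bdiag 3 3 := BDiag dXI_p.
Lemma dcupI_p : is_brauer (mkd 1 3 [:: 3; 2; 1; 0]). Proof. apply: mk_brauer; vm_compute; reflexivity. Qed.
Definition dcupI : bdiag 1 3 := BDiag dcupI_p.
Lemma dIcup_p : is_brauer (mkd 1 3 [:: 1; 0; 3; 2]). Proof. apply: mk_brauer; vm_compute; reflexivity. Qed.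
Definition dIcup : bdiag 1 3 := BDiag dIcup_p.
Lemma dcapI_p : is_brauer (mkd 3 1 [:: 1; 0; 3; 2]). Proof. apply: mk_brauer; vm_compute; reflexivity. Qed.
Definition dcapI : bdiag 3 1 := BDiag dcapI_p.
Lemma dIcap_p : is_brauer (mkd 3 1 [:: 3; 2; 1; 0]). Proof. apply: mk_brauer; vm_compute; reflexivity. Qed.
Definition dIcap : bdiag 3 1 := BDiag dIcap_p.
Lemma dw_p : is_brauer (mkd 1 3 [:: 2; 3; 0; 1]). Proof. apply: mk_brauer; vm_compute; reflexivity. Qed.
Definition dw : bdiag 1 3 := BDiag dw_p.
Lemma dv_p : is_brauer (mkd 3 1 [:: 2; 3; 0; 1]). Proof. apply: mk_brauer; vm_compute; reflexivity. Qed.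
Definition dv : bdiag 3 1 := BDiag dv_p.
Lemma dcapII_p : is_brauer (mkd 4 2 [:: 1; 0; 4; 5; 2; 3]). Proof. apply: mk_brauer; vm_compute; reflexivity. Qed.
Definition dcapII : bdiag 4 2 := BDiag dcapII_p.
Lemma dcc_p : is_brauer (mkd 4 0 [:: 1; 0; 3; 2]). Proof. apply: mk_brauer; vm_compute; reflexivity. Qed.
Definition dcc : bdiag 4 0 := BDiag dcc_p.
Lemma di2cap_p : is_brauer (mkd 4 2 [:: 4; 5; 3; 2; 0; 1]). Proof. apply: mk_brauer; vm_compute; reflexivity. Qed.
Definition di2cap : bdiag 4 2 := BDiag di2cap_p.
Lemma dIcupI_p : is_brauer (mkd 2 4 [:: 2; 5; 0; 4; 3; 1]). Proof. apply: mk_brauer; vm_compute; reflexivity. Qed.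
Definition dIcupI : bdiag 2 4 := BDiag dIcupI_p.
Lemma dcupII_p : is_brauer (mkd 2 4 [:: 4; 5; 3; 2; 0; 1]). Proof. apply: mk_brauer; vm_compute; reflexivity. Qed.
Definition dcupII : bdiag 2 4 := BDiag dcupII_p.
Lemma duu_p : is_brauer (mkd 0 4 [:: 1; 0; 3; 2]). Proof. apply: mk_brauer; vm_compute; reflexivity. Qed.
Definition duu : bdiag 0 4 := BDiag duu_p.
Lemma di2cup_p : is_brauer (mkd 2 4 [:: 2; 3; 0; 1; 5; 4]). Proof. apply: mk_brauer; vm_compute; reflexivity. Qed.
Definition di2cup : bdiag 2 4 := BDiag di2cup_p.
Lemma dIcapI_p : is_brauer (mkd 4 2 [:: 4; 2; 1; 5; 0; 3]). Proof. apply: mk_brauer; vm_compute; reflexivity. Qed.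
Definition dIcapI : bdiag 4 2 := BDiag dIcapI_p.
Lemma T_i1_i1 : btens (bid 1) (bid 1) = Some (bid 2). Proof. btens_tac. Qed.
Lemma T_i1_bX : btens (bid 1) (bX) = Some (dIX). Proof. btens_tac. Qed.
Lemma T_bcup_i1 : btens (bcup) (bid 1) = Some (dcupI). Proof. btens_tac. Qed.
Lemma T_bX_i1 : btens (bX) (bid 1) = Some (dXI). Proof. btens_tac. Qed.
Lemma T_i1_bcup : btens (bid 1) (bcup) = Some (dIcup). Proof. btens_tac. Qed.
Lemma T_bcap_i1 : btens (bcap) (bid 1) = Some (dcapI). Proof. btens_tac. Qed.
Lemma T_i1_bcap : btens (bid 1) (bcap) = Some (dIcap). Proof. btens_tac. Qed.
Lemma T_dcapI_i1 : btens (dcapI) (bid 1) = Some (dcapII). Proof. btens_tac. Qed.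
Lemma T_i2_bcap : btens (bid 2) (bcap) = Some (di2cap). Proof. btens_tac. Qed.
Lemma T_dIcup_i1 : btens (dIcup) (bid 1) = Some (dIcupI). Proof. btens_tac. Qed.
Lemma T_dcupI_i1 : btens (dcupI) (bid 1) = Some (dcupII). Proof. btens_tac. Qed.
Lemma T_i2_bcup : btens (bid 2) (bcup) = Some (di2cup). Proof. btens_tac. Qed.
Lemma T_dIcap_i1 : btens (dIcap) (bid 1) = Some (dIcapI). Proof. btens_tac. Qed.
Lemma C_bX_bX : bcomp (bX) (bX) = Some (0, bid 2). Proof. bcomp_tac. Qed.
Lemma C_bX_i2 : bcomp (bX) (bid 2) = Some (0, bX). Proof. bcomp_tac. Qed.
Lemma C_i2_bX : bcomp (bid 2) (bX) = Some (0, bX). Proof. bcomp_tac. Qed.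
Lemma C_i1_i1 : bcomp (bid 1) (bid 1) = Some (0, bid 1). Proof. bcomp_tac. Qed.
Lemma C_i2_i2 : bcomp (bid 2) (bid 2) = Some (0, bid 2). Proof. bcomp_tac. Qed.
Lemma C_dcupI_dIX : bcomp (dcupI) (dIX) = Some (0, dw). Proof. bcomp_tac. Qed.
Lemma C_dIcup_dXI : bcomp (dIcup) (dXI) = Some (0, dw). Proof. bcomp_tac. Qed.
Lemma C_dIX_dcapI : bcomp (dIX) (dcapI) = Some (0, dv). Proof. bcomp_tac. Qed.
Lemma C_dXI_dIcap : bcomp (dXI) (dIcap) = Some (0, dv). Proof. bcomp_tac. Qed.
Lemma C_bX_bcap : bcomp (bX) (bcap) = Some (0, bcap). Proof. bcomp_tac. Qed.
Lemma C_bcap_bcup : bcomp (bcap) (bcup) = Some (0, bcupcap). Proof. bcomp_tac. Qed.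
Lemma C_bcupcap_bcap : bcomp (bcupcap) (bcap) = Some (1, bcap). Proof. bcomp_tac. Qed.
Lemma C_dIcup_dcapI : bcomp (dIcup) (dcapI) = Some (0, bid 1). Proof. bcomp_tac. Qed.
Lemma C_bcup_bX : bcomp (bcup) (bX) = Some (0, bcup). Proof. bcomp_tac. Qed.
Lemma C_bcup_bcupcap : bcomp (bcup) (bcupcap) = Some (1, bcup). Proof. bcomp_tac. Qed.
Lemma C_dcupI_dIcap : bcomp (dcupI) (dIcap) = Some (0, bid 1). Proof. bcomp_tac. Qed.
Lemma C_bcupcap_bX : bcomp (bcupcap) (bX) = Some (0, bcupcap). Proof. bcomp_tac. Qed.
Lemma C_bX_bcupcap : bcomp (bX) (bcupcap) = Some (0, bcupcap). Proof. bcomp_tac. Qed.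
Lemma C_dcapII_bcap : bcomp (dcapII) (bcap) = Some (0, dcc). Proof. bcomp_tac. Qed.
Lemma C_di2cap_bcap : bcomp (di2cap) (bcap) = Some (0, dcc). Proof. bcomp_tac. Qed.
Lemma C_i2_bcap : bcomp (bid 2) (bcap) = Some (0, bcap). Proof. bcomp_tac. Qed.
Lemma C_bcap_i0 : bcomp (bcap) (bid 0) = Some (0, bcap). Proof. bcomp_tac. Qed.
Lemma C_dIcupI_di2cap : bcomp (dIcupI) (di2cap) = Some (0, bid 2). Proof. bcomp_tac. Qed.
Lemma C_bcup_dcupII : bcomp (bcup) (dcupII) = Some (0, duu). Proof. bcomp_tac. Qed.
Lemma C_bcup_di2cup : bcomp (bcup) (di2cup) = Some (0, duu). Proof. bcomp_tac. Qed.
Lemma C_bcup_i2 : bcomp (bcup) (bid 2) = Some (0, bcup). Proof. bcomp_tac. Qed.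
Lemma C_i0_bcup : bcomp (bid 0) (bcup) = Some (0, bcup). Proof. bcomp_tac. Qed.
Lemma C_di2cup_dIcapI : bcomp (di2cup) (dIcapI) = Some (0, bid 2). Proof. bcomp_tac. Qed.
Lemma C_bcup_bcap : bcomp (bcup) (bcap) = Some (1, bid 0). Proof. bcomp_tac. Qed.


Add Parametric Relation (K : comPzRingType) (delta : K) r s : (tm K r s) (@abeq K delta r s)
  reflexivity proved by (@ab_refl K delta r s)
  symmetry proved by (@ab_sym K delta r s)
  transitivity proved by (@ab_trans K delta r s) as abeq_rel.

#[export] Hint Resolve ab_refl : core.
Add Parametric Morphism (K : comPzRingType) (delta : K) r s t : (@tcomp K r s t)
  with signature (@abeq K delta s t) ==> (@abeq K delta r s) ==> (@abeq K delta r t) as tcomp_mor.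
Proof. by move=> *; apply: ab_comp. Qed.
Add Parametric Morphism (K : comPzRingType) (delta : K) r s k l :
  (@ttens K r s k l)
  with signature (@abeq K delta r s) ==> eq ==> (@abeq K delta (r + k) (s + l)) as ttens_mor.
Proof. by move=> *; apply: ab_tens. Qed.
Add Parametric Morphism (K : comPzRingType) (delta : K) r s : (@tadd K r s)
  with signature (@abeq K delta r s) ==> (@abeq K delta r s) ==> (@abeq K delta r s) as tadd_mor.
Proof. by move=> *; apply: ab_add. Qed.
Add Parametric Morphism (K : comPzRingType) (delta : K) r s a : (@tscale K r s a)
  with signature (@abeq K delta r s) ==> (@abeq K delta r s) as tscale_mor.
Proof. by move=> *; apply: ab_scale. Qed.
Add Parametric Morphism (K : comPzRingType) (delta : K) r s : (@tsub K r s)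
  with signature (@abeq K delta r s) ==> (@abeq K delta r s) ==> (@abeq K delta r s) as tsub_mor.
Proof. by move=> *; apply: ab_add => //; apply: ab_scale. Qed.
Add Parametric Morphism (K : comPzRingType) (delta : K) r s : (@tneg K r s)
  with signature (@abeq K delta r s) ==> (@abeq K delta r s) as tneg_mor.
Proof. by move=> *; apply: ab_scale. Qed.
Add Parametric Morphism (K : comPzRingType) (delta : K) r : (@tpow K r)
  with signature (@abeq K delta r r) ==> eq ==> (@abeq K delta r r) as tpow_mor.
Proof. move=> D E H n; elim: n => [|n IH] /=; first reflexivity. by apply: ab_comp. Qed.

Local Open Scope ring_scope.
Section Lin.
Variables (K : comPzRingType) (delta : K).
Local Notation "A ≡ B" := (abeq delta A B) (at level 70).

Section RS.
Variables (r s : nat).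
Implicit Types (A B C D : tm K r s).

Lemma tddA A B C : tadd A (tadd B C) ≡ tadd (tadd A B) C. Proof. exact: ab_addA. Qed.
Lemma tddC A B : tadd A B ≡ tadd B A. Proof. exact: ab_addC. Qed.
Lemma tdd0 A : tadd tzero A ≡ A. Proof. exact: ab_add0. Qed.
Lemma tddr0 A : tadd A tzero ≡ A. Proof. by rewrite tddC tdd0. Qed.
Lemma tsc0 A : tscale 0 A ≡ tzero. Proof. exact: ab_scale0. Qed.
Lemma tsc1 A : tscale 1 A ≡ A. Proof. exact: ab_scale1. Qed.
Lemma tscA a b A : tscale a (tscale b A) ≡ tscale (a * b) A. Proof. exact: ab_scaleA. Qed.
Lemma tscDl a b A : tscale (a + b) A ≡ tadd (tscale a A) (tscale b A). Proof. exact: ab_scaleDl. Qed.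
Lemma tscDr a A B : tscale a (tadd A B) ≡ tadd (tscale a A) (tscale a B). Proof. exact: ab_scaleDr. Qed.
Lemma tscz a : tscale a (@tzero K r s) ≡ tzero.
Proof. by rewrite -(tsc0 tzero) tscA mulr0. Qed.
Lemma tddAC A B C D : tadd (tadd A B) (tadd C D) ≡ tadd (tadd A C) (tadd B D).
Proof. by rewrite -!tddA (tddA B C) (tddC B C) -tddA. Qed.

Inductive lx := LA of nat | L0 | LD of lx & lx | LZ of K & lx | LS of lx & lx | LN of lx.
Fixpoint lev (env : seq (tm K r s)) e : tm K r s :=
  match e with
  | LA i => nth tzero env i | L0 => tzero | LD a b => tadd (lev env a) (lev env b)
  | LZ c a => tscale c (lev env a) | LS a b => tsub (lev env a) (lev env b)
  | LN a => tneg (lev env a)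
  end.
Fixpoint lvec e (j : nat) : K :=
  match e with
  | LA i => if j == i then 1 else 0 | L0 => 0 | LD a b => lvec a j + lvec b j
  | LZ c a => c * lvec a j | LS a b => lvec a j - lvec b j | LN a => - lvec a j
  end.
Definition vevl (env : seq (tm K r s)) l (f : nat -> K) :=
  foldr (fun j acc => tadd (tscale (f j) (nth tzero env j)) acc) tzero l.

Lemma vevl_ext env l f g : {in l, f =1 g} -> vevl env l f = vevl env l g.
Proof.
elim: l => //= j l IH H; rewrite H ?mem_head // IH // => x Hx; apply: H.
by rewrite in_cons Hx orbT.
Qed.
Lemma vevl_add env l f g : vevl env l (fun j => f j + g j) ≡ tadd (vevl env l f) (vevl env l g).
Proof. elim: l => [|j l IH] /=; first by rewrite tdd0. by rewrite IH tscDl tddAC. Qed.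
Lemma vevl_scale env l c f : vevl env l (fun j => c * f j) ≡ tscale c (vevl env l f).
Proof. elim: l => [|j l IH] /=; first by rewrite tscz. by rewrite IH tscDr tscA. Qed.
Lemma vevl_zero env l : vevl env l (fun j => 0) ≡ tzero.
Proof. elim: l => [|j l IH] //=. by rewrite IH tsc0 tdd0. Qed.
Lemma vevl_atom env l i : uniq l ->
  vevl env l (fun j => if j == i then 1 else 0) ≡ if i \in l then nth tzero env i else tzero.
Proof.
elim: l => [|j l IH] //= /andP[Hj Hu]; rewrite IH // in_cons.
case: (eqVneq j i) => [<-|Hne] /=; first by rewrite (negbTE Hj) tsc1 tddr0.
by rewrite tsc0 tdd0.
Qed.


Lemma lev_vec env e : lev env e ≡ vevl env (iota 0 (size env)) (lvec e).
Proof.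
elim: e => [i||a IHa b IHb|c a IHa|a IHa b IHb|a IHa] /=.
- rewrite vevl_atom ?iota_uniq // mem_iota add0n /=.
  by case: ltnP => // H; rewrite nth_default.
- by rewrite vevl_zero.
- by rewrite vevl_add IHa IHb.
- by rewrite vevl_scale IHa.
- rewrite /tsub /tneg (vevl_ext _ (g := fun j => lvec a j + (-1) * lvec b j)); last first.
    by move=> j _; rewrite mulN1r.
  by rewrite vevl_add vevl_scale IHa IHb.
- rewrite /tneg (vevl_ext _ (g := fun j => (-1) * lvec a j)); last by move=> j _; rewrite mulN1r.
  by rewrite vevl_scale IHa.
Qed.

Lemma lin_eq env e1 e2 :
  map (lvec e1) (iota 0 (size env)) = map (lvec e2) (iota 0 (size env)) ->
  lev env e1 ≡ lev env e2.
Proof.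
move=> H; rewrite !lev_vec (vevl_ext _ (g := lvec e2)); first reflexivity.
by apply/eq_in_map.
Qed.
End RS.
End Lin.

Ltac lidx x env n :=
  lazymatch env with
  | nil => constr:((false, n))
  | cons ?y ?rest =>
      let b := constr:(ltac:(tryif unify x y then exact true else exact false) : bool) in
      lazymatch b with
      | true => constr:((true, n))
      | false => lidx x rest (S n)
      end
  end.
Ltac lapp env x :=
  lazymatch env with
  | nil => constr:(cons x nil)
  | cons ?y ?rest => let r := lapp rest x in constr:(cons y r)
  end.
Ltac reify K env t :=
  lazymatch t with
  | @tadd _ _ _ ?a ?b =>
      let p := reify K env a in
      lazymatch p with (?env1, ?ea) =>
        let q := reify K env1 b in
        lazymatch q with (?env2, ?eb) => constr:((env2, LD ea eb)) end end
  | @tsub _ _ _ ?a ?b =>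
      let p := reify K env a in
      lazymatch p with (?env1, ?ea) =>
        let q := reify K env1 b in
        lazymatch q with (?env2, ?eb) => constr:((env2, LS ea eb)) end end
  | @tscale _ _ _ ?c ?a =>
      let p := reify K env a in
      lazymatch p with (?env1, ?ea) => constr:((env1, LZ c ea)) end
  | @tneg _ _ _ ?a =>
      let p := reify K env a in
      lazymatch p with (?env1, ?ea) => constr:((env1, LN ea)) end
  | @tzero _ _ _ => constr:((env, @L0 K))
  | _ =>
      let f := lidx t env O in
      lazymatch f with
      | (true, ?n) => constr:((env, @LA K n))
      | (false, ?n) => let env' := lapp env t in constr:((env', @LA K n))
      end
  end.
Lemma cons_eq (T : Type) (a b : T) (l1 l2 : seq T) : a = b -> l1 = l2 -> a :: l1 = b :: l2.
Proof. by move=> -> ->. Qed.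
Ltac lcoef := lazymatch goal with
  | |- [::] = [::] => reflexivity
  | |- _ :: _ = _ :: _ => apply: cons_eq; [ring | lcoef]
  end.
Ltac lin :=
  lazymatch goal with |- @abeq ?K ?d ?r ?s ?A ?B =>
    let p := reify K (@nil (tm K r s)) A in
    lazymatch p with (?env1, ?eA) =>
      let q := reify K env1 B in
      lazymatch q with (?env2, ?eB) =>
        change (@abeq K d r s (lev env2 eA) (lev env2 eB)); apply: lin_eq;
        rewrite /=; lcoef
  end end end.

Lemma lintest (K : comPzRingType) (d : K) (A B : tm K 1 1) :
  abeq d (tsub (tadd A (tscale d B)) A) (tadd (tscale (d - 1) B) (tadd B tzero)).
Proof. lin. Qed.

Local Open Scope ring_scope.

Section Core.
Variables (K : comPzRingType) (delta : K).
Local Notation "A ≡ B" := (abeq delta A B) (at level 70).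
Local Notation I0 b := (ttens tI0 b).
Local Notation i0 := (bid 0).
Local Notation i1 := (bid 1).
Local Notation i2 := (bid 2).

Lemma cast_id r s (e1 : r = r) (e2 : s = s) (D : tm K r s) : Defs.tcast e1 e2 D ≡ D.
Proof.
have -> : e1 = erefl by apply: eq_irrelevance.
have -> : e2 = erefl by apply: eq_irrelevance.
exact: ab_cast_id.
Qed.

Lemma ich0 r s t k l m (D : tm K s t) (D' : tm K r s) (b : bdiag l m) (b' : bdiag k l) c :
  bcomp b' b = Some (0%N, c) -> tcomp (ttens D b) (ttens D' b') ≡ ttens (tcomp D D') c.
Proof. by move=> H; rewrite (ab_interchange _ _ _ H) expr0 tsc1. Qed.
Lemma i00 k l m (A : bdiag k l) (B : bdiag l m) C :
  bcomp A B = Some (0%N, C) -> tcomp (I0 B) (I0 A) ≡ I0 C.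
Proof. by move=> H; rewrite (ab_rel_i0 _ H) expr0 tsc1. Qed.
Lemma i01 k l m (A : bdiag k l) (B : bdiag l m) C :
  bcomp A B = Some (1%N, C) -> tcomp (I0 B) (I0 A) ≡ tscale delta (I0 C).
Proof. by move=> H; rewrite (ab_rel_i0 _ H) expr1. Qed.

Lemma compA r s t u (C : tm K t u) (B : tm K s t) (A : tm K r s) :
  tcomp C (tcomp B A) ≡ tcomp (tcomp C B) A.
Proof. exact: ab_compA. Qed.
Lemma compDl r s t (B B' : tm K s t) (A : tm K r s) :
  tcomp (tadd B B') A ≡ tadd (tcomp B A) (tcomp B' A). Proof. exact: ab_compDl. Qed.
Lemma compDr r s t (B : tm K s t) (A A' : tm K r s) :
  tcomp B (tadd A A') ≡ tadd (tcomp B A) (tcomp B A'). Proof. exact: ab_compDr. Qed.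
Lemma compZl r s t a (B : tm K s t) (A : tm K r s) :
  tcomp (tscale a B) A ≡ tscale a (tcomp B A). Proof. exact: ab_compZl. Qed.
Lemma compZr r s t a (B : tm K s t) (A : tm K r s) :
  tcomp B (tscale a A) ≡ tscale a (tcomp B A). Proof. exact: ab_compZr. Qed.
Lemma compBl r s t (B B' : tm K s t) (A : tm K r s) :
  tcomp (tsub B B') A ≡ tsub (tcomp B A) (tcomp B' A).
Proof. by rewrite /tsub /tneg compDl compZl. Qed.
Lemma compBr r s t (B : tm K s t) (A A' : tm K r s) :
  tcomp B (tsub A A') ≡ tsub (tcomp B A) (tcomp B A').
Proof. by rewrite /tsub /tneg compDr compZr. Qed.
Lemma compNl r s t (B : tm K s t) (A : tm K r s) : tcomp (tneg B) A ≡ tneg (tcomp B A).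
Proof. exact: compZl. Qed.
Lemma compNr r s t (B : tm K s t) (A : tm K r s) : tcomp B (tneg A) ≡ tneg (tcomp B A).
Proof. exact: compZr. Qed.
Lemma comp0l r s t (A : tm K r s) : tcomp (@tzero K s t) A ≡ tzero.
Proof. by rewrite -(tsc0 _ (@tzero K s t)) compZl tsc0. Qed.
Lemma comp0r r s t (B : tm K s t) : tcomp B (@tzero K r s) ≡ tzero.
Proof. by rewrite -(tsc0 _ (@tzero K r s)) compZr tsc0. Qed.
Lemma tensD r s k l (D E : tm K r s) (b : bdiag k l) :
  ttens (tadd D E) b ≡ tadd (ttens D b) (ttens E b). Proof. exact: ab_tensD. Qed.
Lemma tensZ r s k l a (D : tm K r s) (b : bdiag k l) :
  ttens (tscale a D) b ≡ tscale a (ttens D b). Proof. exact: ab_tensZ. Qed.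
Lemma tensB r s k l (D E : tm K r s) (b : bdiag k l) :
  ttens (tsub D E) b ≡ tsub (ttens D b) (ttens E b).
Proof. by rewrite /tsub /tneg tensD tensZ. Qed.
Lemma tensN r s k l (D : tm K r s) (b : bdiag k l) : ttens (tneg D) b ≡ tneg (ttens D b).
Proof. exact: tensZ. Qed.
Lemma idl r s (D : tm K r s) : tcomp (tid s) D ≡ D. Proof. exact: ab_id_l. Qed.
Lemma idr r s (D : tm K r s) : tcomp D (tid r) ≡ D. Proof. exact: ab_id_r. Qed.

Lemma tens1M r s t (A : tm K s t) (B : tm K r s) :
  tcomp (ttens A i1) (ttens B i1) ≡ ttens (tcomp A B) i1.
Proof. exact: ich0 C_i1_i1. Qed.

Lemma tensA0 k l m n (b : bdiag k l) (c : bdiag m n) bc :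
  btens b c = Some bc -> ttens (I0 b) c ≡ I0 bc.
Proof. move=> H; apply: ab_trans (ab_tens_assoc _ _ H) _; exact: cast_id. Qed.
Lemma tensA1 (D : tm K 1 1) : ttens (ttens D i1) i1 ≡ ttens D i2.
Proof. apply: ab_trans (ab_tens_assoc _ _ T_i1_i1) _; exact: cast_id. Qed.
Lemma tensA2 (D : tm K 2 2) : ttens (ttens D i1) i1 ≡ ttens D i2.
Proof. apply: ab_trans (ab_tens_assoc _ _ T_i1_i1) _; exact: cast_id. Qed.
Lemma tensU1 (D : tm K 1 1) : ttens D i0 ≡ D.
Proof. apply: ab_trans (ab_tens_unit _ _) _; exact: cast_id. Qed.
Lemma tensU2 (D : tm K 2 2) : ttens D i0 ≡ D.
Proof. apply: ab_trans (ab_tens_unit _ _) _; exact: cast_id. Qed.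
Lemma tensU0 : I0 i0 ≡ tI0.
Proof. apply: ab_trans (ab_tens_unit _ _) _; exact: cast_id. Qed.

Lemma tpowS' r (D : tm K r r) n : tpow D n.+1 ≡ tcomp (tpow D n) D.
Proof.
elim: n => [|n IH] /=; first by rewrite idr idl.
by rewrite [X in tcomp D X]IH compA.
Qed.
Lemma comm_pow r (A B : tm K r r) m : tcomp A B ≡ tcomp B A -> tcomp A (tpow B m) ≡ tcomp (tpow B m) A.
Proof.
move=> H; elim: m => [|m IH] /=; first by rewrite idr idl.
by rewrite compA H -compA IH compA.
Qed.
End Core.

Section Core2.
Variables (K : comPzRingType) (delta : K).
Local Notation "A ≡ B" := (abeq delta A B) (at level 70).
Local Notation I0 b := (ttens tI0 b).
Local Notation i0 := (bid 0).
Local Notation i1 := (bid 1).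
Local Notation i2 := (bid 2).
Local Notation s2 := (I0 bX).
Local Notation e2 := (I0 bcupcap).
Local Notation y1 := (ttens tH i1).
Local Notation Pi := (I0 bcap).
Local Notation Cu := (I0 bcup).
Local Notation J := (ttens (tid 1) bcup).
Local Notation Jc := (ttens (tid 1) bcap).
Local Notation y2 := (tadd (tcomp s2 (tcomp y1 s2)) (tsub s2 e2)).
Local Notation ich0 := (ich0 delta).
Local Notation i00 := (i00 delta).
Local Notation i01 := (i01 delta).
Local Notation tensA0 := (tensA0 delta).

Definition ptr (E : tm K 2 2) : tm K 1 1 := tcomp (ttens Pi i1) (tcomp (ttens E i1) J).
Definition ptr' (E : tm K 2 2) : tm K 1 1 := tcomp Jc (tcomp (ttens E i1) (ttens Cu i1)).
#[local] Instance ptr_Proper : Proper (abeq delta ==> abeq delta) ptr.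
Proof. by move=> E E' H; rewrite /ptr H. Qed.
#[local] Instance ptr'_Proper : Proper (abeq delta ==> abeq delta) ptr'.
Proof. by move=> E E' H; rewrite /ptr' H. Qed.
Lemma ptrD E F : ptr (tadd E F) ≡ tadd (ptr E) (ptr F).
Proof. by rewrite /ptr tensD compDl compDr. Qed.
Lemma ptrB E F : ptr (tsub E F) ≡ tsub (ptr E) (ptr F).
Proof. by rewrite /ptr tensB compBl compBr. Qed.
Lemma ptr'D E F : ptr' (tadd E F) ≡ tadd (ptr' E) (ptr' F).
Proof. by rewrite /ptr' tensD compDl compDr. Qed.
Lemma ptr'B E F : ptr' (tsub E F) ≡ tsub (ptr' E) (ptr' F).
Proof. by rewrite /ptr' tensB compBl compBr. Qed.

Lemma S1 (D : tm K 1 1) : ttrans D ≡ ptr (tcomp (ttens D i1) s2).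
Proof.
rewrite /ttrans /ptr /tPi /tAmalg; apply: ab_comp => //.
have h1 : tcomp (ttens D i2) (ttens (tid 1) bX) ≡ ttens D bX by rewrite (ich0 _ _ C_bX_i2) idr.
rewrite -h1 /tid (tensA0 T_i1_bX) (tensA0 T_bcup_i1) -compA (i00 C_dcupI_dIX).
by rewrite -tens1M tensA1 (tensA0 T_bX_i1) (tensA0 T_i1_bcup) -compA (i00 C_dIcup_dXI).
Qed.

Lemma S1' (D : tm K 1 1) : ttrans D ≡ ptr' (tcomp s2 (ttens D i1)).
Proof.
rewrite /ttrans /ptr' /tPi /tAmalg.
have h1 : tcomp (ttens (tid 1) bX) (ttens D i2) ≡ ttens D bX by rewrite (ich0 _ _ C_i2_bX) idl.
rewrite -h1 /tid (tensA0 T_i1_bX) (tensA0 T_bcup_i1) (tensA0 T_bcap_i1) !compA (i00 C_dIX_dcapI).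
by rewrite -tens1M tensA1 (tensA0 T_bX_i1) (tensA0 T_i1_bcap) !compA (i00 C_dXI_dIcap).
Qed.

Lemma ptrM (A E : tm K 2 2) : ptr (tcomp A E) ≡ tcomp (ttens (tcomp Pi A) i1) (tcomp (ttens E i1) J).
Proof. by rewrite /ptr -tens1M -tens1M !compA. Qed.
Lemma P12 (A B E : tm K 2 2) : tcomp Pi A ≡ tcomp Pi B -> ptr (tcomp A E) ≡ ptr (tcomp B E).
Proof. by move=> H; rewrite !ptrM H. Qed.
Lemma Ps : tcomp Pi s2 ≡ Pi. Proof. exact: i00 C_bX_bcap. Qed.
Lemma P1 (E : tm K 2 2) : ptr (tcomp s2 E) ≡ ptr E.
Proof. by rewrite (@P12 _ (tid 2)) ?idl // Ps idr. Qed.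

Lemma Jcomm (F : tm K 1 1) : tcomp (ttens (ttens F i1) i1) J ≡ tcomp J F.
Proof.
rewrite tensA1 (ich0 F (tid 1) C_bcup_i2) idr.
by symmetry; rewrite -{1}(tensU1 delta F) (ich0 (tid 1) F C_i0_bcup) idl.
Qed.
Lemma zig : tcomp (ttens Pi i1) J ≡ tid 1.
Proof. by rewrite /tid (tensA0 T_bcap_i1) (tensA0 T_i1_bcup) (i00 C_dIcup_dcapI). Qed.
Lemma P3 (F : tm K 1 1) : ptr (ttens F i1) ≡ F.
Proof. by rewrite /ptr Jcomm compA zig idl. Qed.
Lemma P4 (F G : tm K 1 1) :
  ptr (tcomp (tcomp (ttens F i1) Cu) (tcomp Pi (ttens G i1))) ≡
  tcomp (ttens (tcomp Pi (tcomp (ttens F i1) Cu)) i1) G.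
Proof.
set A := tcomp (ttens F i1) Cu; set B := tcomp Pi (ttens G i1); rewrite /ptr.
transitivity (tcomp (tcomp (ttens Pi i1) (ttens A i1)) (tcomp (ttens B i1) J)).
  by rewrite -(tens1M _ A B) !compA.
rewrite tens1M; apply: ab_comp => //.
by rewrite /B -(tens1M _ Pi (ttens G i1)) -compA Jcomm compA zig idl.
Qed.

Lemma Z1 (E : tm K 2 2) : tcomp Pi (ttens (ptr E) i1) ≡ tcomp Pi E.
Proof.
rewrite /ptr -!tens1M !compA (tensA0 T_bcap_i1) (tensA0 T_dcapI_i1) (i00 C_dcapII_bcap).
rewrite -(i00 C_di2cap_bcap) -(tensA0 T_i2_bcap) tensA2.
rewrite -[tcomp (tcomp Pi _) (ttens E i2)]compA (ich0 (I0 i2) E C_i2_bcap) idl.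
have h : ttens E bcap ≡ tcomp E (ttens (I0 i2) bcap).
  by rewrite -{2}(tensU2 delta E) (ich0 E (I0 i2) C_bcap_i0) idr.
rewrite h.
rewrite /tid (tensA0 T_i2_bcap) (tensA0 T_i1_bcup) (tensA0 T_dIcup_i1) -!compA (i00 C_dIcupI_di2cap).
by rewrite idr.
Qed.

Lemma ptr'M (E A : tm K 2 2) :
  ptr' (tcomp E A) ≡ tcomp Jc (tcomp (ttens E i1) (ttens (tcomp A Cu) i1)).
Proof. by rewrite /ptr' -(tens1M _ E A) -(tens1M _ A Cu) !compA. Qed.
Lemma P12' (A B E : tm K 2 2) : tcomp A Cu ≡ tcomp B Cu -> ptr' (tcomp E A) ≡ ptr' (tcomp E B).
Proof. by move=> H; rewrite !ptr'M H. Qed.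
Lemma sC : tcomp s2 Cu ≡ Cu. Proof. exact: i00 C_bcup_bX. Qed.
Lemma P1' (E : tm K 2 2) : ptr' (tcomp E s2) ≡ ptr' E.
Proof. by rewrite (@P12' _ (tid 2)) ?idr // sC idl. Qed.
Lemma Jccomm (F : tm K 1 1) : tcomp Jc (ttens (ttens F i1) i1) ≡ tcomp F Jc.
Proof.
rewrite tensA1 (ich0 (tid 1) F C_i2_bcap) idl.
by symmetry; rewrite -{1}(tensU1 delta F) (ich0 F (tid 1) C_bcap_i0) idr.
Qed.
Lemma zig' : tcomp Jc (ttens Cu i1) ≡ tid 1.
Proof. by rewrite /tid (tensA0 T_i1_bcap) (tensA0 T_bcup_i1) (i00 C_dcupI_dIcap). Qed.
Lemma P3' (F : tm K 1 1) : ptr' (ttens F i1) ≡ F.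
Proof. by rewrite /ptr' compA Jccomm -compA zig' idr. Qed.
Lemma P4' (F G : tm K 1 1) :
  ptr' (tcomp (tcomp (ttens G i1) Cu) (tcomp Pi (ttens F i1))) ≡
  tcomp G (ttens (tcomp Pi (tcomp (ttens F i1) Cu)) i1).
Proof.
set A := tcomp (ttens G i1) Cu; set B := tcomp Pi (ttens F i1); rewrite /ptr'.
transitivity (tcomp (tcomp Jc (ttens A i1)) (tcomp (ttens B i1) (ttens Cu i1))).
  by rewrite -(tens1M _ A B) !compA.
rewrite (tens1M _ B Cu); apply: ab_comp.
  by rewrite /A -(tens1M _ (ttens G i1) Cu) compA Jccomm -compA zig' idr.
by rewrite /B compA.
Qed.
Lemma Z1' (E : tm K 2 2) : tcomp (ttens (ptr' E) i1) Cu ≡ tcomp E Cu.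
Proof.
rewrite /ptr' -!tens1M -!compA (tensA0 T_bcup_i1) (tensA0 T_dcupI_i1) (i00 C_bcup_dcupII).
rewrite -(i00 C_bcup_di2cup) -(tensA0 T_i2_bcup) tensA2.
rewrite [tcomp (ttens E i2) _]compA (ich0 E (I0 i2) C_bcup_i2) idr.
have h : ttens E bcup ≡ tcomp (ttens (I0 i2) bcup) E.
  by rewrite -{2}(tensU2 delta E) (ich0 (I0 i2) E C_i0_bcup) idl.
rewrite h /tid (tensA0 T_i2_bcup) (tensA0 T_i1_bcap) (tensA0 T_dIcap_i1) !compA.
by rewrite (i00 C_di2cup_dIcapI) idl.
Qed.
End Core2.

Local Open Scope ring_scope.

Section Core3.
Variables (K : comPzRingType) (delta : K).
Local Notation "A ≡ B" := (abeq delta A B) (at level 70).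
Local Notation I0 b := (ttens tI0 b).
Local Notation i0 := (bid 0).
Local Notation i1 := (bid 1).
Local Notation i2 := (bid 2).
Local Notation s2 := (I0 bX).
Local Notation e2 := (I0 bcupcap).
Local Notation y1 := (ttens tH i1).
Local Notation Pi := (I0 bcap).
Local Notation Cu := (I0 bcup).
Local Notation y2 := (tadd (tcomp s2 (tcomp y1 s2)) (tsub s2 e2)).
Local Notation ich0 := (ich0 delta).
Local Notation i00 := (i00 delta).
Local Notation i01 := (i01 delta).
Local Notation tensA0 := (tensA0 delta).
Local Notation Phi := (tPhi delta).
#[local] Instance ptr_P : Proper (abeq delta ==> abeq delta) (@ptr K) := @ptr_Proper K delta.
#[local] Instance ptr'_P : Proper (abeq delta ==> abeq delta) (@ptr' K) := @ptr'_Proper K delta.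

Lemma ss : tcomp s2 s2 ≡ tid 2. Proof. exact: i00 C_bX_bX. Qed.

Lemma se : tcomp s2 e2 ≡ e2. Proof. exact: i00 C_bcupcap_bX. Qed.
Lemma es : tcomp e2 s2 ≡ e2. Proof. exact: i00 C_bX_bcupcap. Qed.
Lemma Pe : tcomp Pi e2 ≡ tscale delta Pi. Proof. exact: i01 C_bcupcap_bcap. Qed.
Lemma eC : tcomp e2 Cu ≡ tscale delta Cu. Proof. exact: i01 C_bcup_bcupcap. Qed.
Lemma eCP : e2 ≡ tcomp Cu Pi. Proof. symmetry; exact: i00 C_bcap_bcup. Qed.
Lemma PC : tcomp Pi Cu ≡ tscale delta tI0. Proof. by rewrite (i01 C_bcup_bcap) tensU0. Qed.

Lemma Rii : tcomp y1 y2 ≡ tcomp y2 y1.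
Proof.
have h := ab_rel_ii delta; rewrite /tcommut /tH02 /tH12 /tX0 /tH01 in h.
transitivity (tadd (tsub (tcomp y1 y2) (tcomp y2 y1)) (tcomp y2 y1) : tm K 2 2); first by lin.
by rewrite h tdd0.
Qed.
Lemma F2 : tcomp s2 y2 ≡ tadd (tcomp y1 s2) (tsub (tid 2) e2).
Proof. by rewrite compDr compBr !compA ss idl se. Qed.
Lemma F2' : tcomp y2 s2 ≡ tadd (tcomp s2 y1) (tsub (tid 2) e2).
Proof. rewrite compDl compBl -!compA; setoid_rewrite ss; setoid_rewrite idr; setoid_rewrite es; reflexivity. Qed.
Lemma Phi1 : ttens Phi i1 ≡ tsub (tscale (1 - delta) (tid 2)) y1.
Proof. by rewrite /tPhi tensB tensZ /tid (tensA0 T_i1_i1). Qed.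
Lemma PH : tcomp Pi (tcomp y1 s2) ≡ tneg (tcomp Pi y1).
Proof.
have h1 := S1 delta tH; have h2 := Z1 delta (tcomp y1 s2).
by rewrite -h2 -h1 ab_rel_iii /tneg tensZ compZr.
Qed.
Lemma HC : tcomp s2 (tcomp y1 Cu) ≡ tneg (tcomp y1 Cu).
Proof.
have h1 := S1' delta tH; have h2 := Z1' delta (tcomp s2 y1).
by rewrite compA -h2 -h1 ab_rel_iii /tneg tensZ compZl.
Qed.

Lemma Py2 : tcomp Pi y2 ≡ tcomp Pi (ttens Phi i1).
Proof.
rewrite Phi1 compDr compBr compBr compZr !compA.
setoid_rewrite idr; setoid_rewrite Ps; setoid_rewrite <- compA; setoid_rewrite PH.
setoid_rewrite Pe; lin.
Qed.

Lemma y2C : tcomp y2 Cu ≡ tcomp (ttens Phi i1) Cu.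
Proof.
rewrite Phi1 compDl compBl compBl compZl -!compA.
setoid_rewrite idl; setoid_rewrite sC; setoid_rewrite HC.
setoid_rewrite eC; lin.
Qed.
Lemma cPhi : tcomp (ttens Phi i1) y2 ≡ tcomp y2 (ttens Phi i1).
Proof.
rewrite Phi1 compBl compBr compZl compZr.
setoid_rewrite idl; setoid_rewrite idr; setoid_rewrite Rii; reflexivity.
Qed.
Lemma cpow1 (F : tm K 1 1) m : tcomp (ttens F i1) y2 ≡ tcomp y2 (ttens F i1) ->
  tcomp (ttens (tpow F m) i1) y2 ≡ tcomp y2 (ttens (tpow F m) i1).
Proof.
move=> H; elim: m => [|m IH] /=.
  rewrite /tid (tensA0 T_i1_i1); setoid_rewrite idl; setoid_rewrite idr; reflexivity.
rewrite -tens1M -compA; setoid_rewrite IH.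
rewrite [tcomp (ttens F i1) (tcomp y2 _)]compA; setoid_rewrite H; rewrite -compA; reflexivity.
Qed.
Lemma cHk k : tcomp (ttens (tpow tH k) i1) y2 ≡ tcomp y2 (ttens (tpow tH k) i1).
Proof. by apply: cpow1; exact: Rii. Qed.
Lemma cPhim m : tcomp (ttens (tpow Phi m) i1) y2 ≡ tcomp y2 (ttens (tpow Phi m) i1).
Proof. by apply: cpow1; exact: cPhi. Qed.
Lemma Pym m : tcomp Pi (tpow y2 m) ≡ tcomp Pi (ttens (tpow Phi m) i1).
Proof.
elim: m => [|m IH] /=.
  rewrite /tid (tensA0 T_i1_i1); reflexivity.
rewrite compA Py2 -compA.
setoid_rewrite (comm_pow m cPhi).
rewrite compA IH -compA (tens1M delta (tpow Phi m) Phi) -tpowS'; reflexivity.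
Qed.
Lemma y2mC m : tcomp (tpow y2 m) Cu ≡ tcomp (ttens (tpow Phi m) i1) Cu.
Proof.
elim: m => [|m IH] /=.
  rewrite /tid (tensA0 T_i1_i1); reflexivity.
rewrite -compA IH (compA delta y2 (ttens (tpow Phi m) i1) Cu) -(cPhim m).
rewrite -(compA delta (ttens (tpow Phi m) i1) y2 Cu) y2C.
rewrite (compA delta (ttens (tpow Phi m) i1) (ttens Phi i1) Cu) (tens1M delta (tpow Phi m) Phi).
rewrite -tpowS'; reflexivity.
Qed.

Lemma Q1 k m : ptr (tcomp (ttens (tpow tH k) i1) (tpow y2 m)) ≡ tcomp (tpow Phi m) (tpow tH k).
Proof.
rewrite (comm_pow m (cHk k)) (P12 _ (Pym m)) (tens1M delta (tpow Phi m) (tpow tH k)).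
exact: P3.
Qed.
Lemma Q2 k m : ptr (tcomp (tcomp (ttens (tpow tH k) i1) e2) (tpow y2 m)) ≡
  tcomp (ttens (tZ k) i1) (tpow Phi m).
Proof.
have h : tcomp (ttens (tpow tH k) i1) e2 ≡ tcomp (ttens (tpow tH k) i1) (tcomp Cu Pi).
  by apply: ab_comp => //; exact: eCP.
rewrite h.
transitivity (@ptr K (tcomp (tcomp (ttens (tpow tH k) i1) Cu) (tcomp Pi (tpow y2 m)))).
  by rewrite !compA.
rewrite (Pym m) P4; reflexivity.
Qed.
Lemma Q1' k m : ptr' (tcomp (tpow y2 m) (ttens (tpow tH k) i1)) ≡ tcomp (tpow tH k) (tpow Phi m).
Proof.
rewrite -(comm_pow m (cHk k)) (P12' _ (y2mC m)) (tens1M delta (tpow tH k) (tpow Phi m)).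
exact: P3'.
Qed.
Lemma Q2' k m : ptr' (tcomp (tcomp (tpow y2 m) e2) (ttens (tpow tH k) i1)) ≡
  tcomp (tpow Phi m) (ttens (tZ k) i1).
Proof.
have h : tcomp (tpow y2 m) e2 ≡ tcomp (tpow y2 m) (tcomp Cu Pi).
  by apply: ab_comp => //; exact: eCP.
rewrite h.
transitivity (@ptr' K (tcomp (tcomp (tpow y2 m) Cu) (tcomp Pi (ttens (tpow tH k) i1)))).
  by rewrite !compA.
rewrite (y2mC m) P4'; reflexivity.
Qed.
Lemma Z0 : ttens (tZ 0) i1 ≡ tscale delta (tid 1).
Proof.
rewrite /tZ /= /tPi /tAmalg /tid (tensA0 T_i1_i1); setoid_rewrite idl; rewrite PC tensZ.
reflexivity.
Qed.
Lemma cHP : tcomp tH Phi ≡ tcomp Phi tH.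
Proof. rewrite /tPhi compBl compBr compZl compZr idl idr; reflexivity. Qed.
Lemma commHPhi k m : tcomp (tpow tH k) (tpow Phi m) ≡ tcomp (tpow Phi m) (tpow tH k).
Proof.
have h1 : tcomp tH (tpow Phi m) ≡ tcomp (tpow Phi m) tH := comm_pow m cHP.
symmetry; exact: (comm_pow k (ab_sym h1)).
Qed.

Lemma tpowS r (D : tm K r r) n : tpow D n.+1 = tcomp D (tpow D n). Proof. by []. Qed.
Definition f k m : tm K 1 1 := ptr (tcomp (tcomp (ttens (tpow tH k) i1) s2) (tpow y2 m)).
Definition g k m : tm K 1 1 := ptr' (tcomp (tpow y2 m) (tcomp s2 (ttens (tpow tH k) i1))).

Lemma frec k m : f k m.+1 ≡ tadd (f k.+1 m)
  (tsub (tcomp (tpow Phi m) (tpow tH k)) (tcomp (ttens (tZ k) i1) (tpow Phi m))).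
Proof.
rewrite /f -(Q1 k m) -(Q2 k m).
have hk : ttens (tpow tH k.+1) i1 ≡ tcomp (ttens (tpow tH k) i1) y1.
  by rewrite (tpowS' delta tH k) (tens1M delta (tpow tH k) tH).
rewrite hk.
rewrite tpowS.
rewrite (compA delta (tcomp (ttens (tpow tH k) i1) s2) y2 (tpow y2 m)).
rewrite -(compA delta (ttens (tpow tH k) i1) s2 y2) F2.
rewrite compDr compBr compDl compBl ptrD ptrB.
rewrite (compA delta (ttens (tpow tH k) i1) y1 s2).
setoid_rewrite idr.
lin.
Qed.

Lemma grec k m : g k m.+1 ≡ tadd (g k.+1 m)
  (tsub (tcomp (tpow tH k) (tpow Phi m)) (tcomp (tpow Phi m) (ttens (tZ k) i1))).
Proof.
rewrite /g -(Q1' k m) -(Q2' k m).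
have hk : ttens (tpow tH k.+1) i1 ≡ tcomp y1 (ttens (tpow tH k) i1).
  by rewrite tpowS; symmetry; apply: tens1M.
rewrite hk (tpowS' delta y2 m).
rewrite -(compA delta (tpow y2 m) y2 (tcomp s2 (ttens (tpow tH k) i1))).
rewrite (compA delta y2 s2 (ttens (tpow tH k) i1)) F2'.
rewrite compDl compBl compDr compBr ptr'D ptr'B.
rewrite -(compA delta s2 y1 (ttens (tpow tH k) i1)).
rewrite (compA delta (tpow y2 m) e2 (ttens (tpow tH k) i1)).
setoid_rewrite idl.
lin.
Qed.
Lemma f0 m : f 0 m ≡ tpow Phi m.
Proof.
transitivity (@ptr K (tcomp (ttens (tpow tH 0) i1) (tpow y2 m))); last by rewrite Q1 idr.
rewrite /f /= /tid (tensA0 T_i1_i1); setoid_rewrite idl; rewrite P1; reflexivity.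
Qed.
Lemma g0 m : g 0 m ≡ tpow Phi m.
Proof.
transitivity (@ptr' K (tcomp (tpow y2 m) (ttens (tpow tH 0) i1))); last by rewrite Q1' idl.
rewrite /g /= /tid (tensA0 T_i1_i1); setoid_rewrite idr; rewrite P1'; reflexivity.
Qed.
End Core3.

Local Open Scope ring_scope.

Section Core4.
Variables (K : comPzRingType) (delta : K).
Local Notation "A ≡ B" := (abeq delta A B) (at level 70).
Local Notation I0 b := (ttens tI0 b).
Local Notation i0 := (bid 0).
Local Notation i1 := (bid 1).
Local Notation i2 := (bid 2).
Local Notation s2 := (I0 bX).
Local Notation e2 := (I0 bcupcap).
Local Notation y1 := (ttens tH i1).
Local Notation Pi := (I0 bcap).
Local Notation Cu := (I0 bcup).
Local Notation y2 := (tadd (tcomp s2 (tcomp y1 s2)) (tsub s2 e2)).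
Local Notation ich0 := (ich0 delta).
Local Notation i00 := (i00 delta).
Local Notation i01 := (i01 delta).
Local Notation tensA0 := (tensA0 delta).
Local Notation Phi := (tPhi delta).
#[local] Instance ptr_P4 : Proper (abeq delta ==> abeq delta) (@ptr K) := @ptr_Proper K delta.
#[local] Instance ptr'_P4 : Proper (abeq delta ==> abeq delta) (@ptr' K) := @ptr'_Proper K delta.

Section TS.
Variables (r s : nat).
Implicit Types (F G : nat -> tm K r s).
Lemma foldr_rcons' F l x : foldr (fun i acc => tadd (F i) acc) tzero (rcons l x) ≡
  tadd (foldr (fun i acc => tadd (F i) acc) tzero l) (F x).
Proof.
elim: l => [|y l IH] /=; first by rewrite tddr0 tdd0.
by rewrite IH tddA.
Qed.
Lemma tsum_recr F a b : (a <= b)%N -> tsum F a b.+1 ≡ tadd (tsum F a b) (F b).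
Proof.
move=> Hab; rewrite /tsum /index_iota (subSn Hab) -addn1 iotaD cats1 subnKC //.
exact: foldr_rcons'.
Qed.
Lemma tsum_ext F G a b : (forall i, F i ≡ G i) -> tsum F a b ≡ tsum G a b.
Proof.
move=> H; rewrite /tsum; elim: (index_iota a b) => [|i l IH] //=.
by rewrite IH H.
Qed.
Lemma tsum_sub F G a b :
  tsum (fun i => tsub (F i) (G i)) a b ≡ tsub (tsum F a b) (tsum G a b).
Proof.
rewrite /tsum; elim: (index_iota a b) => [|i l IH] /=; first by lin.
rewrite IH; lin.
Qed.
End TS.

Lemma cPhiL (A : tm K 1 1) : tcomp Phi A ≡ tsub (tscale (1 - delta) A) (tcomp tH A).
Proof. by rewrite /tPhi compBl compZl idl. Qed.
Lemma cPhiR (A : tm K 1 1) : tcomp A Phi ≡ tsub (tscale (1 - delta) A) (tcomp A tH).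
Proof. by rewrite /tPhi compBr compZr idr. Qed.

Lemma Cf n m : f K n.+1 m ≡
  tsub (tsum (fun i => tcomp (tG i) (tpow Phi (m + n - i))) 1 n.+1) (tcomp tH (tpow Phi (m + n))).
Proof.
elim: n m => [|n IH] m.
  set W := tsub (tcomp (tpow Phi m) (tpow tH 0)) (tcomp (ttens (tZ 0) i1) (tpow Phi m)).
  have e : f K 1 m ≡ tsub (f K 0 m.+1) W by rewrite (frec delta 0 m) /W; lin.
  rewrite e f0 /W Z0 addn0 /= idr compZl idl.
  rewrite (cPhiL (tpow Phi m)).
  rewrite /tsum /=; lin.
set W := tsub (tcomp (tpow Phi m) (tpow tH n.+1)) (tcomp (ttens (tZ n.+1) i1) (tpow Phi m)).
have e : f K n.+2 m ≡ tsub (f K n.+1 m.+1) W by rewrite (frec delta n.+1 m) /W; lin.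
rewrite e IH addSnnS (tsum_recr (fun i => tcomp (tG i) (tpow Phi (m + n.+1 - i))) (isT : (1 <= n.+1)%N)).
cbv beta; rewrite addnK /tG compBl /W -(commHPhi delta n.+1 m).
lin.
Qed.

Lemma Cg n m : g K n.+1 m ≡
  tsub (tsum (fun i => tcomp (tpow Phi (m + n - i)) (tG i)) 1 n.+1) (tcomp (tpow Phi (m + n)) tH).
Proof.
elim: n m => [|n IH] m.
  set W := tsub (tcomp (tpow tH 0) (tpow Phi m)) (tcomp (tpow Phi m) (ttens (tZ 0) i1)).
  have e : g K 1 m ≡ tsub (g K 0 m.+1) W by rewrite (grec delta 0 m) /W; lin.
  rewrite e g0 (tpowS' delta Phi m) /W Z0 addn0 /= idl compZr idr.
  rewrite (cPhiR (tpow Phi m)).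
  rewrite /tsum /=; lin.
set W := tsub (tcomp (tpow tH n.+1) (tpow Phi m)) (tcomp (tpow Phi m) (ttens (tZ n.+1) i1)).
have e : g K n.+2 m ≡ tsub (g K n.+1 m.+1) W by rewrite (grec delta n.+1 m) /W; lin.
rewrite e IH addSnnS (tsum_recr (fun i => tcomp (tpow Phi (m + n.+1 - i)) (tG i)) (isT : (1 <= n.+1)%N)).
cbv beta; rewrite addnK /tG compBr /W (commHPhi delta n.+1 m).
lin.
Qed.

Definition Cm l i : tm K 1 1 := tcommut (ttens (tZ i) i1) (tpow Phi (l - i)).
Definition Xs l : tm K 1 1 := tsum (fun i => tcomp (tG i) (tpow Phi (l - i))) 1 l.+1.
Definition Ys l : tm K 1 1 := tsum (fun i => tcomp (tpow Phi (l - i)) (tG i)) 1 l.+1.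

Lemma T1 l : ttrans (tpow tH l.+1) ≡ f K l.+1 0.
Proof. rewrite /f (S1 delta) /=; setoid_rewrite idr; reflexivity. Qed.
Lemma T2 l : ttrans (tpow tH l.+1) ≡ g K l.+1 0.
Proof. rewrite /g (S1' delta) /=; setoid_rewrite idl; reflexivity. Qed.
Lemma part1 l : ttrans (tpow tH l.+1) ≡ tsub (Xs l) (tcomp tH (tpow Phi l)).
Proof. exact: ab_trans (T1 l) (Cf l 0). Qed.
Lemma part2 l : ttrans (tpow tH l.+1) ≡ tsub (Ys l) (tcomp (tpow Phi l) tH).
Proof. exact: ab_trans (T2 l) (Cg l 0). Qed.
Lemma XY l : Xs l ≡ Ys l.
Proof.
have H1 := ab_trans (ab_sym (part1 l)) (part2 l).
transitivity (tadd (tsub (Xs l) (tcomp tH (tpow Phi l))) (tcomp tH (tpow Phi l))); first by lin.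
rewrite H1 (comm_pow l (cHP delta)); lin.
Qed.
Lemma part3 l : tsum (Cm l) 1 l ≡ tzero.
Proof.
case: l => [|n]; first by rewrite /tsum /=.
have h2 : tsum (fun i => tsub (tcomp (tG i) (tpow Phi (n.+1 - i))) (tcomp (tpow Phi (n.+1 - i)) (tG i))) 1 n.+2
   ≡ tsum (Cm n.+1) 1 n.+2.
  apply: tsum_ext => i; rewrite /Cm /tG /tcommut compBl compBr (commHPhi delta i (n.+1 - i)); lin.
rewrite tsum_sub in h2.
have h3 := tsum_recr (Cm n.+1) (isT : (1 <= n.+1)%N).
have h4 : Cm n.+1 n.+1 ≡ tzero by rewrite /Cm subnn /= /tcommut idr idl; lin.
transitivity (tsub (tadd (tsum (Cm n.+1) 1 n.+1) (Cm n.+1 n.+1)) (Cm n.+1 n.+1)); first by lin.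
rewrite -h3 -h2 h4 -/(Xs n.+1) -/(Ys n.+1) (XY n.+1); lin.
Qed.
End Core4.

Local Close Scope ring_scope.
Theorem corollary2p18 (K : comPzRingType) (delta : K) (l : nat) :
  (* (H^{l+1})^T = sum_{i=1}^l G_i Phi^{l-i} - H Phi^l *)
  abeq delta (ttrans (tpow tH l.+1))
    (tsub (tsum (fun i => tcomp (tG i) (tpow (tPhi delta) (l - i))) 1 l.+1)
          (tcomp tH (tpow (tPhi delta) l)))
  /\
  (* (H^{l+1})^T = sum_{i=1}^l Phi^{l-i} G_i - Phi^l H *)
  abeq delta (ttrans (tpow tH l.+1))
    (tsub (tsum (fun i => tcomp (tpow (tPhi delta) (l - i)) (tG i)) 1 l.+1)
          (tcomp (tpow (tPhi delta) l) tH))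
  /\
  (* sum_{i=1}^{l-1} [Z_i (x) I, Phi^{l-i}] = 0 *)
  abeq delta (tsum (fun i => tcommut (ttens (tZ i) (bid 1)) (tpow (tPhi delta) (l - i))) 1 l)
    tzero.
Proof.
split; first exact: part1.
split; first exact: part2.
exact: part3.
Qed.
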